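(* Let $k\ge3$ and let $\pi\in\mathcal{S}_n$ be a Schröder permutation. Then $\pi$ avoids the pattern $2\,1\,3\,4\cdots k$ if and only if every element $(i,j)\in\mathcal{E}(\pi)$ satisfies $i+j\ge n+3-k+\rho(i,j)$.
   Context: A permutation avoids $\tau\in\mathcal{S}_k$ if no subsequence of length $k$ is in the same relative order as $\tau$. A Schröder permutation is one avoiding both $1243$ and $2143$. Represent $\pi\in\mathcal{S}_n$ by an $n\times n$ array, rows $i$ numbered top to bottom, columns $j$ left to right, with a dot in square $(i,\pi_i)$. The diagram $D(\pi)$ is the set of squares $(i,j)$ with $\pi_i>j$ and $\pi^{-1}(j)>i$. The essential set $\mathcal{E}(\pi)$ is the set of $(i,j)\in D(\pi)$ with $(i+1,j)\notin D(\pi)$ and $(i,j+1)\notin D(\pi)$ (squares outside the array count as not in $D(\pi)$). The rank of $(i,j)$ is $\rho(i,j)=\#\{k'<i:\pi_{k'}<j\}$. *)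

(* Defs.v *)
From mathcomp Require Import all_boot all_order all_fingroup.
Set Implicit Arguments. Unset Strict Implicit. Unset Printing Implicit Defensive.

(* Patterns are given as sequences of nat (0-based values), e.g. 2143 is
   [:: 1; 0; 3; 2]. Permutations are s : 'S_n acting on 'I_n (0-based). *)

Definition contains (n : nat) (s : 'S_n) (tau : seq nat) : Prop :=
  exists f : 'I_(size tau) -> 'I_n,
    (forall a b : 'I_(size tau), a < b -> f a < f b) /\
    (forall a b : 'I_(size tau),
        (s (f a) < s (f b)) = (nth 0 tau a < nth 0 tau b)).

Definition avoids (n : nat) (s : 'S_n) (tau : seq nat) : Prop :=
  ~ contains s tau.

Definition schroder (n : nat) (s : 'S_n) : Prop :=
  avoids s [:: 0; 1; 3; 2] /\ avoids s [:: 1; 0; 3; 2].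

Definition pat2134 (k : nat) : seq nat := 1 :: 0 :: iota 2 (k - 2).

(* 1-based view: for 1 <= i <= n, pval s i = pi_i in {1..n}. *)
Definition pval (n : nat) (s : 'S_n) (i : nat) : nat :=
  if i.-1 < n =P true is ReflectT h then (val (s (Ordinal h))).+1 else 0.

Definition pinv (n : nat) (s : 'S_n) (j : nat) : nat :=
  if j.-1 < n =P true is ReflectT h then (val ((s^-1)%g (Ordinal h))).+1 else 0.

Definition in_diagram (n : nat) (s : 'S_n) (i j : nat) : bool :=
  [&& 1 <= i <= n, 1 <= j <= n, j < pval s i & i < pinv s j].

Definition in_essential (n : nat) (s : 'S_n) (i j : nat) : bool :=
  [&& in_diagram s i j, ~~ in_diagram s i.+1 j & ~~ in_diagram s i j.+1].

Definition rank (n : nat) (s : 'S_n) (i j : nat) : nat :=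
  count (fun k' => pval s k' < j) (iota 1 i.-1).

(* Main.v *)
From mathcomp Require Import all_boot all_order all_fingroup zify.
Require Import Defs.
Set Implicit Arguments. Unset Strict Implicit.
Lemma card_count (T : finType) (A : {pred T}) : #|A| = count (mem A) (enum T).
Proof. by rewrite cardE enumT /enum_mem size_filter. Qed.

Lemma card_iota (n m : nat) (P : pred nat) : m <= n ->
  #|[pred T : 'I_n | (T < m) && P T]| = count P (iota 0 m).
Proof.
move=> mn; rewrite card_count.
rewrite -(count_map val (fun t => (t < m) && P t)) val_enum_ord.
rewrite -(subnKC mn) iotaD count_cat add0n.
have -> : count (fun t => (t < m) && P t) (iota m (n - m)) = 0.
  rewrite -(count_pred0 (iota m (n - m))).
  by apply: eq_in_count => t; rewrite mem_iota; case/andP=> h _; rewrite ltnNge h.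
rewrite addn0; apply: eq_in_count => t; rewrite mem_iota; case/andP=> _ ->.
done.
Qed.
Lemma pvalE n (s : 'S_n) (I : 'I_n) : pval s I.+1 = (s I).+1.
Proof.
rewrite /pval /=; case: eqP => [h|]; last by rewrite ltn_ord.
by congr (_.+1); congr (val (s _)); apply: val_inj.
Qed.

Lemma pinvE n (s : 'S_n) (J : 'I_n) : pinv s J.+1 = ((s^-1)%g J).+1.
Proof.
rewrite /pinv /=; case: eqP => [h|]; last by rewrite ltn_ord.
by congr (_.+1); congr (val ((s^-1)%g _)); apply: val_inj.
Qed.

Lemma diagE n (s : 'S_n) (I J : 'I_n) :
  in_diagram s I.+1 J.+1 = (J < s I) && (I < (s^-1)%g J).
Proof.
by rewrite /in_diagram pvalE pinvE !ltnS !ltn_ord /=.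
Qed.

Lemma diag_bound n (s : 'S_n) i j : in_diagram s i j ->
  exists I J : 'I_n, i = I.+1 /\ j = J.+1.
Proof.
case/and4P=> /andP[i1 i2] /andP[j1 j2] _ _.
have hi : i.-1 < n by rewrite prednK.
have hj : j.-1 < n by rewrite prednK.
by exists (Ordinal hi), (Ordinal hj); rewrite /= !prednK.
Qed.

Lemma count_id n (s : 'S_n) (I J : 'I_n) : J < s I -> I < (s^-1)%g J ->
  #|[pred T : 'I_n | (I < T) && (J < s T)]| + I + J + 2 = n + rank s I.+1 J.+1.
Proof.
move=> h1 h2.
have hr : rank s I.+1 J.+1 = #|[pred T : 'I_n | (T < I) && (s T < J)]|.
  rewrite /rank /=.
  have -> : iota 1 I = map (addn 1) (iota 0 I) by rewrite -iotaDl.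
  rewrite count_map.
  rewrite -(@card_iota n); last by apply: ltnW.
  by apply: eq_card => T; rewrite !inE /= add1n pvalE ltnS.
pose A := [pred T : 'I_n | T <= I].
pose B := [pred T : 'I_n | s T <= J].
have hA : #|A| = I.+1.
  rewrite -[I.+1](size_iota 0) -count_predT -(@card_iota n) ?ltn_ord //.
  by apply: eq_card => T; rewrite !inE /= andbT.
have hB : #|B| = J.+1.
  rewrite (@eq_card _ B (s @^-1: [set u : 'I_n | u <= J])); last first.
    by move=> T; rewrite !inE.
  rewrite card_preimset; last by apply: perm_inj.
  rewrite -[J.+1](size_iota 0) -count_predT -(@card_iota n) ?ltn_ord //.
  by apply: eq_card => T; rewrite !inE /= andbT.
have hI : #|[predI A & B]| = #|[pred T : 'I_n | (T < I) && (s T < J)]|.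
  apply: eq_card => T; rewrite !inE /=.
  apply/andP/andP => [[a b]|[a b]]; last by split; apply: ltnW.
  split.
    rewrite ltn_neqAle a andbT; apply/negP => /eqP e.
    have eT : T = I by apply: val_inj.
    by move: b; rewrite eT leqNgt h1.
  rewrite ltn_neqAle b andbT; apply/negP => /eqP e.
  have eT : s T = J by apply: val_inj.
  move: h2; rewrite -eT permK ltnNge a //.
have hC : #|[predC [predU A & B]]| = #|[pred T : 'I_n | (I < T) && (J < s T)]|.
  by apply: eq_card => T; rewrite !inE /= negb_or -!ltnNge.
have := cardUI A B; have := cardC [predU A & B]; rewrite card_ord.
rewrite hr hA hB hI hC.
set x := #|[predU A & B]|; move: hr; set y := #|[pred T : 'I_n | I < T & J < s T]|; set z := #|[pred T : 'I_n | T < I & s T < J]|.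
move=> hr e1 e2. lia.
Qed.

Lemma beq (a b : bool) : (a -> b) -> (b -> a) -> a = b.
Proof. by case: a; case: b => // h1 h2; [move: (h1 isT) | move: (h2 isT)]. Qed.

Lemma mk_contains n (s : 'S_n) (tau : seq nat) (g : nat -> 'I_n) :
  (forall a b, a < b -> b < size tau -> g a < g b) ->
  (forall a b, a < size tau -> b < size tau ->
     (s (g a) < s (g b)) = (nth 0 tau a < nth 0 tau b)) ->
  contains s tau.
Proof.
move=> h1 h2; exists (fun a => g a); split => a b.
  by move=> ab; apply: h1 => //.
by apply: h2.
Qed.

Lemma schroder_inc n (s : 'S_n) : schroder s ->
  forall E C T1 T2 : 'I_n, E < C -> s C < s E -> C < T1 -> T1 < T2 ->
  s E < s T1 -> s E < s T2 -> s T1 < s T2.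
Proof.
case=> _ H E C T1 T2 h1 h2 h3 h4 h5 h6.
case: (ltngtP (s T1) (s T2)) => // h7; last first.
  have : T1 = T2 by apply: (perm_inj (s := s)); apply: val_inj.
  by move=> e; move: h4; rewrite e ltnn.
exfalso; apply: H.
apply: (@mk_contains _ _ _ (fun a => nth E [:: E; C; T1; T2] a)) => a b /=.
  move=> ab bs.
  case: a ab => [|[|[|a]]] ab; case: b ab bs => [|[|[|[|b]]]] //= ab bs; lia.
move=> ha hb.
case: a ha => [|[|[|[|a]]]] ha //; case: b hb => [|[|[|[|b]]]] hb //=;
 by apply: beq => ?; lia.
Qed.

Lemma size_pat k : 2 <= k -> size (pat2134 k) = k.
Proof. by move=> hk; rewrite /pat2134 /= size_iota; lia. Qed.

Lemma nth_pat k c : c.+2 < k -> nth 0 (pat2134 k) c.+2 = c.+2.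
Proof. by move=> hk; rewrite /pat2134 /= nth_iota; lia. Qed.

Lemma mk2134 n (s : 'S_n) k (E C : 'I_n) (u : nat -> 'I_n) : 2 <= k ->
  E < C -> s C < s E ->
  (forall c, c.+2 < k -> C < u c /\ s E < s (u c)) ->
  (forall c d, c < d -> d.+2 < k -> u c < u d /\ s (u c) < s (u d)) ->
  contains s (pat2134 k).
Proof.
move=> hk h1 h2 h3 h4.
apply: (@mk_contains _ _ _ (fun a => match a with 0 => E | 1 => C | c.+2 => u c end));
  rewrite size_pat // => a b.
  move=> ab bk; case: a ab => [|[|a]] ab; case: b ab bk => [|[|b]] //= ab bk.
  - by have [? ?] := h3 b bk; lia.
  - by have [? ?] := h3 b bk.
  - by have [? ?] := h4 a b ab bk.
move=> ha hb; case: a ha => [|[|a]] ha; case: b hb => [|[|b]] hb;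
  rewrite ?nth_pat //=; try (by rewrite ltnn).
- by apply: beq => ?; lia.
- by have [? ?] := h3 b hb; apply: beq => ?; lia.
- by have [? ?] := h3 b hb; apply: beq => ?; lia.
- by have [? ?] := h3 a ha; apply: beq => ?; lia.
- by have [? ?] := h3 a ha; apply: beq => ?; lia.
- case: (ltngtP a b) => ab.
  + by have [? ?] := h4 a b ab hb; apply: beq => ?; lia.
  + by have [? ?] := h4 b a ab ha; apply: beq => ?; lia.
  + by subst; rewrite !ltnn.
Qed.

Lemma dir1 n (s : 'S_n) k : 3 <= k -> schroder s -> avoids s (pat2134 k) ->
  forall i j, in_essential s i j -> n + 3 + rank s i j <= i + j + k.
Proof.
move=> hk hs hav i j /and3P[hD hD1 hD2].
have [I [J [ei ej]]] := diag_bound hD; subst i j.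
move: hD; rewrite diagE => /andP[h1 h2].
have hI1 : I.+1 < n by have := ltn_ord ((s^-1)%g J); lia.
have hJ1 : J.+1 < n by have := ltn_ord (s I); lia.
pose I1 := Ordinal hI1; pose J1 := Ordinal hJ1.
have vI1 : I1 = I.+1 :> nat by []. have vJ1 : J1 = J.+1 :> nat by [].
have c1 : s I1 <= J.
  rewrite leqNgt; apply/negP => h.
  have := hD1; rewrite (_ : I.+2 = I1.+1) // diagE h /= -leqNgt => h3.
  have e : (s^-1)%g J = I1 by apply: val_inj => /=; lia.
  by move: h; rewrite -e permKV ltnn.
have c2 : (s^-1)%g J1 <= I.
  rewrite leqNgt; apply/negP => h.
  have := hD2; rewrite (_ : J.+2 = J1.+1) // diagE h andbT -leqNgt => h3.
  have e : s I = J1 by apply: ord_inj; lia.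
  by move: h; rewrite -e permK ltnn.
pose E := (s^-1)%g J1.
have sE : s E = J1 by rewrite /E permKV.
pose P := fun t : nat => (I < t) && (J < s (insubd E t)).
pose L := filter P (iota 0 n).
have hm : #|[pred T : 'I_n | (I < T) && (J < s T)]| = size L.
  rewrite size_filter -(@card_iota n n) //.
  by apply: eq_card => T; rewrite !inE ltn_ord /= /P valKd.
have hcnt := count_id h1 h2.
rewrite leqNgt; apply/negP => Hlt; apply: hav.
have hsz : k - 2 <= size L.
  move: Hlt hcnt; rewrite hm; move: (size L) (rank s I.+1 J.+1) => x y ? ?; lia.
pose u := fun c => insubd E (nth 0 L c) : 'I_n.
have hu : forall c, c.+2 < k -> [/\ val (u c) = nth 0 L c, I1 < u c & s E < s (u c)].
  move=> c ck.
  have : nth 0 L c \in L by apply: mem_nth; apply: (leq_trans _ hsz); lia.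
  rewrite mem_filter mem_iota /P => /andP[/andP[hIt hJt] /andP[_ htn]].
  have vu : val (u c) = nth 0 L c by rewrite /u val_insubd htn.
  split => //.
    rewrite /= vu ltn_neqAle hIt andbT; apply/negP => /eqP e.
    have eu : u c = I1 by apply: val_inj; rewrite vu -e.
    by move: hJt; rewrite -/(u c) eu ltnNge c1.
  rewrite sE /= ltn_neqAle; apply/andP; split; last by [].
  apply/negP => /eqP e.
  have eu : u c = E by apply: (perm_inj (s := s)); apply: ord_inj; rewrite sE /=; exact/esym.
  by move: hIt; rewrite -vu eu ltnNge c2.
have hsorted : sorted ltn L by apply: sorted_filter; [exact: ltn_trans | exact: iota_ltn_sorted].
have hpos : forall c d, c < d -> d.+2 < k -> u c < u d.
  move=> c d cd dk.
  have [vc _ _] := hu c ltac:(lia); have [vd _ _] := hu d dk.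
  rewrite vc vd; apply: (sorted_ltn_nth ltn_trans) => //; rewrite inE; lia.
apply: (@mk2134 _ s k E I1 u) => //.
- lia.
- by rewrite sE vJ1 ltnS.
- by move=> c ck; have [_ ? ?] := hu c ck.
move=> c d cd dk; split; first exact: hpos.
have [_ ? ?] := hu c ltac:(lia); have [_ ? ?] := hu d dk.
apply: (schroder_inc hs (E := E) (C := I1)) => //.
- by rewrite sE vJ1 ltnS.
- exact: hpos.
Qed.

Lemma dir2 n (s : 'S_n) k : 3 <= k ->
  (forall i j, in_essential s i j -> n + 3 + rank s i j <= i + j + k) ->
  avoids s (pat2134 k).
Proof.
move=> hk hyp [f [hf1 hf2]].
have hsz : size (pat2134 k) = k by apply: size_pat; lia.
have h0 : 0 < size (pat2134 k) by rewrite hsz; lia.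
have h1' : 1 < size (pat2134 k) by rewrite hsz; lia.
pose a0 := Ordinal h0; pose a1 := Ordinal h1'.
pose x := f a0; pose y := f a1.
have xy : x < y by apply: hf1.
have syx : s y < s x by rewrite hf2.
have hnth : forall a : 'I_(size (pat2134 k)), 2 <= a -> nth 0 (pat2134 k) a = a.
  case=> [[|[|c]] hcc] // _.
  change (nth 0 (pat2134 k) c.+2 = c.+2); rewrite nth_pat //.
  by move: hcc; rewrite hsz.
have hc : forall a : 'I_(size (pat2134 k)), 2 <= a -> y < f a /\ s x < s (f a).
  move=> a ha; split; first by apply: hf1; exact: ha.
  by rewrite hf2 (hnth a ha) /=; exact: ha.
pose S := [set T : 'I_n | (y < T) && (s x < s T)].
have hS : k - 2 <= #|S|.
  have inj : injective f.
    move=> a b e; apply: ord_inj; case: (ltngtP a b) => // h.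
      by have := hf1 _ _ h; rewrite e ltnn.
    by have := hf1 _ _ h; rewrite e ltnn.
  have : f @: [set a : 'I_(size (pat2134 k)) | 2 <= a] \subset S.
    apply/subsetP => T /imsetP[a]; rewrite inE => ha ->; rewrite inE.
    by have [? ?] := hc a ha; apply/andP.
  move/subset_leq_card; rewrite card_imset //.
  have -> : #|[set a : 'I_(size (pat2134 k)) | 2 <= a]| = k - 2.
    have := cardsC [set a : 'I_(size (pat2134 k)) | 2 <= a].
    rewrite card_ord.
    have -> : #|~: [set a : 'I_(size (pat2134 k)) | 2 <= a]| = 2.
      rewrite [RHS](_ : 2 = count predT (iota 0 2)) // -(@card_iota (size (pat2134 k))) //.
      by apply: eq_card => a; rewrite !inE -ltnNge andbT.
    lia.
  done.
pose P := fun p : 'I_n * 'I_n => [&& x <= p.1, p.1 <= y, s y <= p.2, p.2 <= s x,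
   p.2 < s p.1 & p.1 < (s^-1)%g p.2].
have P0 : P (x, s y) by rewrite /P /= permK leqnn ltnW // leqnn ltnW // syx xy.
case: (@arg_maxnP _ _ P (fun p : 'I_n * 'I_n => (p.1 : nat) + p.2) P0) => [[I J]] /and5P[hx hy hsy hsx /andP[hJI hIJ]] hmax.
rewrite /= in hx hy hsy hsx hJI hIJ.
have Iy : I < y.
  rewrite ltn_neqAle hy andbT; apply/negP => /eqP e.
  have eI : I = y by apply: ord_inj.
  by move: hJI; rewrite eI ltnNge hsy.
have Jx : J < s x.
  rewrite ltn_neqAle hsx andbT; apply/negP => /eqP e.
  have eJ : J = s x by apply: ord_inj.
  by move: hIJ; rewrite eJ permK ltnNge hx.
have hI1 : I.+1 < n by have := ltn_ord y; lia.
have hJ1 : J.+1 < n by have := ltn_ord (s x); lia.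
have hess : in_essential s I.+1 J.+1.
  rewrite /in_essential diagE hJI hIJ /=.
  apply/andP; split.
    rewrite (_ : I.+2 = (Ordinal hI1).+1) // diagE; apply/negP => hd.
    have hP : P (Ordinal hI1, J).
      rewrite /P /=; case/andP: hd => d1 d2.
      by rewrite hsy hsx d1 d2 Iy !andbT; apply: (leq_trans hx); apply: leqnSn.
    by have := hmax _ hP; rewrite /=; lia.
  rewrite (_ : J.+2 = (Ordinal hJ1).+1) // diagE; apply/negP => hd.
  have hP : P (I, Ordinal hJ1).
    rewrite /P /=; case/andP: hd => d1 d2.
    by rewrite hx hy d1 d2 Jx !andbT; apply: (leq_trans hsy); apply: leqnSn.
  by have := hmax _ hP; rewrite /=; lia.
have := hyp _ _ hess.
have hcnt := count_id hJI hIJ.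
have hsub : #|S| <= #|[pred T : 'I_n | (I < T) && (J < s T)]|.
  apply: subset_leq_card; apply/subsetP => T; rewrite !inE => /andP[t1 t2].
  apply/andP; split; lia.
move: hcnt hsub hS.
move: (#|S|) (#|[pred T : 'I_n | (I < T) && (J < s T)]|) (rank s I.+1 J.+1) => a b c.
lia.
Qed.

Unset Implicit Arguments. Set Strict Implicit.

Theorem theorem3p3 (n k : nat) (s : 'S_n) :
  3 <= k -> schroder s ->
  (avoids s (pat2134 k) <->
   (forall i j : nat, in_essential s i j ->
      n + 3 + rank s i j <= i + j + k)).
Proof.
move=> hk hs; split; first exact: dir1.
exact: dir2.
Qed.
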